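(* Fix integers $d\geq 1$ and $k\geq 1$. For any edge $e$ of $\mathbb{Z}^d$ there exists a unique $z\in(2k\mathbb{Z})^d$, denoted $g(e)$, such that $e$ is an edge of $Q_k^z$. Furthermore, any cycle $(e_1,\dots,e_n)$ in $\mathbb{Z}^d$ contains at least two edges $e_i,e_j$ (with $i\neq j$) such that $g(e_i)=g(e_j)$.
   Context: For $z\in(2k\mathbb{Z})^d$ let $B_k^z=([-k,k]^d\cap\mathbb{Z}^d)+z$, let $E(B_k^z)$ be the set of edges of $\mathbb{Z}^d$ with both endpoints in $B_k^z$, and let $Q_k^z$ be the subgraph of $B_k^z$ with edge set $\{(x,y)\in E(B_k^z):\ \text{there is no }\ell\in\{1,\dots,d\}\text{ with }x_\ell=y_\ell=z_\ell-k\}$. *)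

(* Defs.v *)
From mathcomp Require Import all_boot all_order all_algebra.
Set Implicit Arguments. Unset Strict Implicit. Unset Printing Implicit Defensive.
Import Order.TTheory GRing.Theory Num.Theory.
Local Open Scope ring_scope.

Definition point (d : nat) := 'I_d -> int.

Definition adj (d : nat) (x y : point d) : Prop :=
  exists l : 'I_d, `|x l - y l| = 1 /\ forall m : 'I_d, m != l -> x m = y m.

Definition lattice2k (d k : nat) (z : point d) : Prop :=
  forall l : 'I_d, (((2 * k)%N)%:Z %| z l)%Z.

Definition inBox (d k : nat) (z x : point d) : Prop :=
  forall l : 'I_d, z l - k%:Z <= x l /\ x l <= z l + k%:Z.

Definition inQ (d k : nat) (z x y : point d) : Prop :=
  adj x y /\ inBox k z x /\ inBox k z y /\
  ~ (exists l : 'I_d, x l = z l - k%:Z /\ y l = z l - k%:Z).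

(* Main.v *)
Require Import Defs.
From mathcomp Require Import all_boot all_order all_algebra.
From mathcomp Require Import zify.
From Stdlib Require Import FunctionalExtensionality.
Import Order.TTheory GRing.Theory Num.Theory.
Local Open Scope ring_scope.
Set Implicit Arguments. Unset Strict Implicit.

Lemma adj_sym d (x y : point d) : adj x y -> adj y x.
Proof.
case=> l [hl he]; exists l; split; first by rewrite distrC.
by move=> m hm; rewrite he.
Qed.

Lemma adj_max d k (x y z : point d) : adj x y ->
  inQ k z x y <-> forall m, z m - k%:Z < Num.max (x m) (y m) <= z m + k%:Z.
Proof.
case=> l [hl he]; split.
- case=> _ [bx [bY nq]] m; have := bx m; have := bY m.
  case: (eqVneq m l) => [->|hm]; first lia.
  have e := he m hm.
  have : ~ (x m = z m - k%:Z /\ y m = z m - k%:Z) by move=> h; apply: nq; exists m.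
  rewrite e; lia.
- move=> H; split; first by exists l.
  split; [|split].
  + move=> m; have := H m; case: (eqVneq m l) => [->|hm]; first lia.
    have := he m hm; lia.
  + move=> m; have := H m; case: (eqVneq m l) => [->|hm]; first lia.
    have := he m hm; lia.
  + case=> m [h1 h2]; have := H m; rewrite h1 h2; lia.
Qed.

Definition fz (k : nat) (a : int) : int :=
  - (((k%:Z - a) %/ (2 * k)%N%:Z)%Z * (2 * k)%N%:Z).

Lemma fz_spec k a : (1 <= k)%N -> fz k a - k%:Z < a <= fz k a + k%:Z.
Proof.
move=> hk; rewrite /fz.
have e := divz_eq (k%:Z - a) (2 * k)%N%:Z.
have h0 : 0 <= ((k%:Z - a) %% (2 * k)%N%:Z)%Z by apply: modz_ge0; lia.
have h1 : ((k%:Z - a) %% (2 * k)%N%:Z)%Z < (2 * k)%N%:Z by apply: ltz_pmod; lia.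
lia.
Qed.

Lemma fz_lat d k (x : point d) : lattice2k k (fun m => fz k (x m)).
Proof. by move=> m; apply/dvdzP; eexists; rewrite /fz -mulNr. Qed.

Lemma uniq_lat k (z1 z2 M : int) : (1 <= k)%N ->
  (((2 * k)%N)%:Z %| z1)%Z -> (((2 * k)%N)%:Z %| z2)%Z ->
  z1 - k%:Z < M <= z1 + k%:Z -> z2 - k%:Z < M <= z2 + k%:Z -> z1 = z2.
Proof.
move=> hk /dvdzP [q1 ->] /dvdzP [q2 ->] h1 h2.
suff -> : q1 = q2 by [].
have hc : 0 < (2 * k)%N%:Z by lia.
have : - (2 * k)%N%:Z < q1 * (2 * k)%N%:Z - q2 * (2 * k)%N%:Z < (2 * k)%N%:Z by lia.
move: hc; set c := (2 * k)%N%:Z; nia.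
Qed.

Definition Ssum {d} (x : point d) : int := \sum_(m < d) x m.

Lemma sum_le d (x y : point d) : adj x y -> Ssum y <= Ssum x -> forall m, y m <= x m.
Proof.
case=> l [hl he] hs.
have : Ssum x - Ssum y = x l - y l.
  rewrite /Ssum -sumrB (bigD1 l) //= big1 ?addr0 // => m hm.
  by rewrite he // subrr.
move=> e m; case: (eqVneq m l) => [->|hm]; first lia.
by rewrite he.
Qed.

Lemma argmax (F : nat -> int) n : (0 < n)%N ->
  exists i, (i < n)%N /\ forall j, (j < n)%N -> F j <= F i.
Proof.
elim: n => // n IH _.
case: n IH => [|n] IH.
  by exists 0%N; split => // j; rewrite ltnS leqn0 => /eqP ->.
case: (IH erefl) => i [hi hm].
case: (lerP (F n.+1) (F i)) => h.
- exists i; split; first by apply: ltn_trans hi _.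
  move=> j; rewrite ltnS leq_eqVlt => /orP [/eqP ->|]; [done|exact: hm].
- exists n.+1; split => // j; rewrite ltnS leq_eqVlt => /orP [/eqP ->|hj]//.
  exact: le_trans (hm _ hj) (ltW h).
Qed.

Theorem claim2p2 (d k : nat) (hd : (1 <= d)%N) (hk : (1 <= k)%N) :
  (forall x y : point d, adj x y ->
     exists! z : point d, lattice2k k z /\ inQ k z x y) /\
  (forall (n : nat) (v : nat -> point d),
     (3 <= n)%N ->
     (forall i j : nat, (i < n)%N -> (j < n)%N -> v i = v j -> i = j) ->
     (forall i : nat, (i < n)%N -> adj (v i) (v ((i + 1) %% n)%N)) ->
     exists i j : nat, [/\ (i < n)%N, (j < n)%N, i <> j &
       exists z : point d, [/\ lattice2k k z,
         inQ k z (v i) (v ((i + 1) %% n)%N) & inQ k z (v j) (v ((j + 1) %% n)%N)]]).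
Proof.
split.
- move=> x y hxy.
  exists (fun m => fz k (Num.max (x m) (y m))); split.
    split; first exact: fz_lat.
    by apply/(adj_max _ _ hxy) => m; apply: fz_spec.
  move=> z [hz /(adj_max _ _ hxy) hq]; apply: functional_extensionality => m.
  apply: (uniq_lat (M := Num.max (x m) (y m)) hk (@fz_lat d k (fun m => Num.max (x m) (y m)) m) (hz m)) => //.
  exact: fz_spec.
- move=> n v hn _ hadj.
  have hn0 : (0 < n)%N by lia.
  have [i [hi hm]] := argmax (fun i => Ssum (v i)) hn0.
  set j := if i == 0%N then n.-1 else i.-1.
  have hj : (j < n)%N by rewrite /j; case: ifP => _; lia.
  have hji : ((j + 1) %% n)%N = i.
    rewrite /j; case: (eqVneq i 0%N) => [->|hi0].
      by rewrite addn1 prednK ?modnn //; lia.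
    by rewrite addn1 prednK ?modn_small //; lia.
  have hij : i <> j by rewrite /j; case: ifP => /eqP; lia.
  exists i, j; split => //.
  exists (fun m => fz k (v i m)); split; first exact: fz_lat.
  + have ha := hadj i hi.
    have hle := sum_le ha (hm _ (ltn_pmod _ hn0)).
    apply/(adj_max _ _ ha) => m.
    have -> : Num.max (v i m) (v ((i + 1) %% n)%N m) = v i m by have := hle m; lia.
    exact: fz_spec.
  + have ha := hadj j hj; rewrite hji in ha *.
    have hle := sum_le (adj_sym ha) (hm _ hj).
    apply/(adj_max _ _ ha) => m.
    have -> : Num.max (v j m) (v i m) = v i m by have := hle m; lia.
    exact: fz_spec.
Qed.
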